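(* Let $w$ be a 2D-weight and $\mathfrak{K}_w$ the 2D-GWN operator associated with $w$. Then for every $\Phi\in\mathcal{S}^*(M)$, $$\mathfrak{K}_w\Phi=\sum_{j,k=0}^\infty w(j,k)\,\mathfrak{a}_k^\dagger\mathfrak{a}_j\mathfrak{a}_j^\dagger\mathfrak{a}_k\Phi,$$ where the double series converges naturally, i.e. the square partial sums $\sum_{j,k=0}^n w(j,k)\mathfrak{a}_k^\dagger\mathfrak{a}_j\mathfrak{a}_j^\dagger\mathfrak{a}_k\Phi$ converge to $\mathfrak{K}_w\Phi$ in the strong topology of $\mathcal{S}^*(M)$ as $n\to\infty$.
   Context: Setting: $M$ a discrete-time normal martingale with the chaotic representation property; $Z_0=M_0$, $Z_n=M_n-M_{n-1}$; $\Gamma$ the finite subsets of $\mathbb{N}$, $Z_\emptyset=1$, $Z_\sigma=\prod_{j\in\sigma}Z_j$, an orthonormal basis of $\mathcal{L}^2(M)=L^2(\Omega,\sigma(M_n;n\ge0),P)$. $\lambda_\emptyset=1$, $\lambda_\sigma=\prod_{k\in\sigma}(k+1)$; $\mathcal{S}(M)=\{\xi\in\mathcal{L}^2(M):\sum_\sigma\lambda_\sigma^{2p}|\langle Z_\sigma,\xi\rangle|^2<\infty\ \forall p\ge0\}$ with the topology of these Hilbertian norms (countably Hilbertian nuclear), $\mathcal{S}^*(M)$ its dual with the strong topology. Fock transform $\widehat\Phi(\sigma)=\Phi(Z_\sigma)$ (determines $\Phi$). $\mathbf{1}_\sigma$ is the indicator of $\sigma$. A 2D-weight is a nonnegative $w$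 on $\mathbb{N}^2$ with $\sup_k\sum_jw(j,k)<\infty$; its spectral function is $\vartheta_w(\sigma)=\sum_j\mathbf{1}_\sigma(j)w(j,j)+\sum_{j,k}(1-\mathbf{1}_\sigma(j))\mathbf{1}_\sigma(k)w(j,k)$; the 2D-GWN operator $\mathfrak{K}_w$ is the unique continuous linear operator on $\mathcal{S}^*(M)$ with $\widehat{\mathfrak{K}_w\Phi}(\sigma)=\vartheta_w(\sigma)\widehat\Phi(\sigma)$. For $k\ge0$, $\mathfrak{a}_k,\mathfrak{a}_k^\dagger$ are the continuous linear operators on $\mathcal{S}^*(M)$ determined by $\widehat{\mathfrak{a}_k\Phi}(\sigma)=(1-\mathbf{1}_\sigma(k))\widehat\Phi(\sigma\cup\{k\})$ and $\widehat{\mathfrak{a}_k^\dagger\Phi}(\sigma)=\mathbf{1}_\sigma(k)\widehat\Phi(\sigma\setminus\{k\})$. *)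

(* Defs.v *)
From HB Require Import structures.
From mathcomp Require Import all_boot all_order all_algebra.
From mathcomp Require Import finmap.
From mathcomp Require Import complex.
From mathcomp Require Import boolp classical_sets functions reals constructive_ereal ereal esum.
Set Implicit Arguments. Unset Strict Implicit. Unset Printing Implicit Defensive.
Import Order.TTheory GRing.Theory Num.Theory.
Local Open Scope ring_scope.
Local Open Scope classical_set_scope.
Local Open Scope complex_scope.
Local Open Scope ring_scope.

(* Gamma: the finite subsets of N (index set of the basis Z_sigma). *)
Definition Gamma := {fset nat}.

Section QWN.
Variable R : realType.
Local Notation C := R[i].

Definition cmod (z : C) : R := Normc.normc z.

Definition lam (s : Gamma) : R := \prod_(k <- s) (k.+1)%:R.

(* Via the chaotic representation property, xi in L^2(M) is identified with
   its coefficient family (<Z_sigma, xi>)_{sigma in Gamma}.  A "vector" is such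
   a family. *)
Definition vect := Gamma -> C.

Definition pnorm2 (p : nat) (x : vect) : \bar R :=
  (\esum_(s in [set: Gamma]) ((lam s ^+ (2 * p)) * cmod (x s) ^+ 2)%:E)%E.

Definition test (x : vect) : Prop := forall p : nat, (pnorm2 p x < +oo)%E.

Definition Zb (s : Gamma) : vect := fun t => if t == s then 1 else 0.

(* functionals on S(M); elements of S*(M) are the continuous linear ones *)
Definition GF := vect -> C.

Definition gen_functional (Phi : GF) : Prop :=
  (forall (a : C) (x y : vect), test x -> test y ->
     Phi (fun s => a * x s + y s) = a * Phi x + Phi y) /\
  (exists (p : nat) (c : R), forall x : vect, test x ->
     (((cmod (Phi x)) ^+ 2)%:E <= c%:E * pnorm2 p x)%E).

Definition fock (Phi : GF) (s : Gamma) : C := Phi (Zb s).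

Definition ind (s : Gamma) (j : nat) : R := (j \in s)%:R.

Definition weight2D (w : nat -> nat -> R) : Prop :=
  (forall j k, 0 <= w j k) /\
  (exists c : R, forall k, (\esum_(j in [set: nat]) (w j k)%:E <= c%:E)%E).

Definition vartheta (w : nat -> nat -> R) (s : Gamma) : R :=
  \sum_(j <- s) w j j +
  fine (\esum_(jk in [set: nat * nat])
          ((1 - ind s jk.1) * ind s jk.2 * w jk.1 jk.2)%:E)%E.

Definition is_GWN_op (w : nat -> nat -> R) (K : GF -> GF) : Prop :=
  forall Phi, gen_functional Phi ->
    gen_functional (K Phi) /\
    forall s, fock (K Phi) s = (vartheta w s)%:C * fock Phi s.

Definition is_annihilators (a : nat -> GF -> GF) : Prop :=
  forall k Phi, gen_functional Phi ->
    gen_functional (a k Phi) /\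
    forall s, fock (a k Phi) s = (1 - ind s k)%:C * fock Phi (s `|` [fset k])%fset.

Definition is_creators (ad : nat -> GF -> GF) : Prop :=
  forall k Phi, gen_functional Phi ->
    gen_functional (ad k Phi) /\
    forall s, fock (ad k Phi) s = (ind s k)%:C * fock Phi (s `\ k)%fset.

Definition bounded_set (B : set vect) : Prop :=
  (forall x, B x -> test x) /\
  (forall p : nat, exists c : R, forall x, B x -> (pnorm2 p x <= c%:E)%E).

(* convergence in the strong topology of S*(M): uniform convergence on
   bounded subsets of S(M) *)
Definition strong_cvg (u : nat -> GF) (Phi : GF) : Prop :=
  forall B : set vect, bounded_set B ->
  forall eps : R, 0 < eps -> exists N : nat, forall n, (N <= n)%N ->
    forall x, B x -> cmod (u n x - Phi x) <= eps.

End QWN.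

(* Main.v *)
Require Import Defs.
From HB Require Import structures.
From mathcomp Require Import all_boot all_order all_algebra.
From mathcomp Require Import finmap complex.
From mathcomp Require Import boolp classical_sets functions reals constructive_ereal ereal esum.
From mathcomp Require Import cardinality fsbigop.
From mathcomp.algebra_tactics Require Import ring lra.
Import Order.TTheory GRing.Theory Num.Theory.
Local Open Scope ring_scope.
Local Open Scope complex_scope.
Local Open Scope ring_scope.
Local Open Scope classical_set_scope.
Lemma cmod_ge0 {R : realType} (z : R[i]) : 0 <= cmod z.
Proof. by case: z => a b; rewrite /cmod /= sqrtr_ge0. Qed.
Lemma cmodM {R : realType} (z y : R[i]) : cmod (z * y) = cmod z * cmod y.
Proof. exact: Normc.normcM. Qed.
Lemma cmodD {R : realType} (z y : R[i]) : cmod (z + y) <= cmod z + cmod y.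
Proof. exact: (@le_normcD R z y). Qed.
Lemma cmodN {R : realType} (z : R[i]) : cmod (- z) = cmod z.
Proof. exact: (@normcN R z). Qed.
Lemma cmodC {R : realType} (x : R) : cmod (x%:C) = `|x|.
Proof. by rewrite /cmod /= expr0n /= addr0 sqrtr_sqr. Qed.
Lemma cmod0 {R : realType} : cmod (0 : R[i]) = 0.
Proof. exact: Normc.normc0. Qed.
Lemma fin_le_esum {R : realType} {T : choiceType} (f : T -> \bar R) (F : {fset T}) :
  (\sum_(t <- F) f t <= \esum_(t in [set: T]) f t)%E.
Proof.
apply: esum_ge; exists [set` F]; first by split; [exact: finite_fset|].
by rewrite fsbig_finite ?set_fsetK //; exact: finite_fset.
Qed.
Lemma lam_ge1 {R : realType} (s : Gamma) : 1 <= lam R s.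
Proof.
rewrite /lam; elim: (enum_fset s) => [|a r IH]; rewrite ?big_nil ?big_cons //.
by apply: mulr_ege1 => //; rewrite ler1n.
Qed.

Lemma pnorm2_ge_term {R : realType} p (x : vect R) s :
  (((lam R s) ^+ (2 * p) * cmod (x s) ^+ 2)%:E <= pnorm2 p x)%E.
Proof.
have := fin_le_esum (fun t => ((lam R t) ^+ (2 * p) * cmod (x t) ^+ 2)%:E) [fset s]%fset.
by rewrite big_seq_fset1.
Qed.

Lemma fin_support_test {R : realType} (A : {fset Gamma}) (v : vect R) :
  (forall t, t \notin A -> v t = 0) -> test v.
Proof.
move=> vA p; rewrite /pnorm2.
rewrite (eq_esum (b := fun t => if t \in [set` A] then
   ((lam R t) ^+ (2 * p) * cmod (v t) ^+ 2)%:E else 0%E)); last first.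
  move=> t _; case: ifPn => // /negP tA; rewrite vA ?cmod0 ?expr0n ?mulr0 //.
  by apply/negP => tA'; apply: tA; rewrite inE.
rewrite -esum_mkcond esum_fset; last by move=> t _; rewrite lee_fin mulr_ge0 ?exprn_ge0 ?cmod_ge0 // (le_trans _ (lam_ge1 t)).
  by rewrite fsbig_finite ?set_fsetK ?finite_fset // sumEFin ltry.
exact: finite_fset.
Qed.

Lemma test_le {R : realType} (x y : vect R) :
  (forall t, cmod (y t) <= cmod (x t)) -> test x -> test y.
Proof.
move=> le tx p; apply: le_lt_trans (tx p); apply: le_esum => t _.
rewrite lee_fin ler_wpM2l ?exprn_ge0 ?(le_trans _ (lam_ge1 t)) //.
by rewrite lerXn2r ?nnegrE ?cmod_ge0.
Qed.

Lemma pnorm2_Zb {R : realType} p s : pnorm2 p (Zb R s) = ((lam R s) ^+ (2 * p))%:E.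
Proof.
rewrite /pnorm2 (eq_esum (b := fun t => if t \in [set s] then
   ((lam R t) ^+ (2 * p) * cmod (Zb R s t) ^+ 2)%:E else 0%E)); last first.
  move=> t _; case: ifPn => // /negP ts; rewrite /Zb ifN ?cmod0 ?expr0n ?mulr0 //.
  by apply/negP => /eqP ts'; apply: ts; rewrite inE.
rewrite -esum_mkcond esum_set1 /Zb ?eqxx.
  by rewrite /cmod /= expr1n expr0n addr0 sqrtr1 expr1n mulr1.
by rewrite lee_fin mulr_ge0 ?exprn_ge0 ?cmod_ge0 // (le_trans _ (lam_ge1 s)).
Qed.
Lemma esum_tail {R : realType} {T : choiceType} (f : T -> R) :
  (forall t, 0 <= f t) -> (\esum_(t in [set: T]) (f t)%:E < +oo)%E ->
  forall eps : R, 0 < eps -> exists A : {fset T}, forall G : {fset T},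
    (forall t, t \in G -> t \notin A) -> \sum_(t <- G) f t <= eps.
Proof.
move=> f0 fin eps eps0.
set S := esum _ _ in fin.
have S0 : (0 <= S)%E by apply: esum_ge0 => t _; rewrite lee_fin.
have SE : S = (fine S)%:E by rewrite fineK // ge0_fin_numE.
have : ((fine S - eps)%:E < S)%E by rewrite {2}SE lte_fin ltrBlDr ltrDl.
move=> /ereal_sup_gt [y [X [finX _] <-]].
rewrite fsbig_finite //= sumEFin lte_fin => HA.
exists (fset_set X) => G dis.
have := fin_le_esum (fun t => (f t)%:E) (fset_set X `|` G)%fset.
rewrite -/S SE sumEFin lee_fin (big_fsetID _ (mem (fset_set X))) /=.
have -> : [fset x in (fset_set X `|` G)%fset | x \in fset_set X]%fset = fset_set X.
  apply/fsetP => t; rewrite !inE; case: (t \in fset_set X) => //=; by rewrite andbF.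
have -> : [fset x in (fset_set X `|` G)%fset | x \notin fset_set X]%fset = G.
  apply/fsetP => t; rewrite !inE; case: (boolP (t \in G)) => tG.
    by rewrite orbT /= (dis _ tG).
  rewrite orbF; by case: (t \in fset_set X).
move=> H; lra.
Qed.
Definition good {R : realType} (F : GF R) : Prop :=
  forall y : vect R, test y -> forall eps : R, 0 < eps ->
  exists A : {fset Gamma}, forall A' : {fset Gamma}, (A `<=` A')%fset ->
    cmod (F y - \sum_(s <- A') y s * F (Zb R s)) <= eps.

Lemma Zb_test {R : realType} s : test (Zb R s).
Proof.
apply: (fin_support_test [fset s]%fset) => t; rewrite inE /Zb => /negPf -> //.
Qed.

Lemma partial_eval {R : realType} (F : GF R) (y : vect R) (r : seq Gamma) :
  gen_functional F ->
  F (fun t => \sum_(s <- r) y s * Zb R s t) = \sum_(s <- r) y s * F (Zb R s).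
Proof.
move=> [lin _].
have ztest : test (fun _ : Gamma => 0 : R[i]).
  by apply: (fin_support_test fset0).
have F0 : F (fun _ => 0) = 0.
  have := lin 1 (fun _ => 0) (fun _ => 0) ztest ztest.
  have -> : (fun s : Gamma => 1 * (0 : R[i]) + 0) = (fun _ => 0).
    by apply: funext => s; rewrite mulr0 addr0.
  rewrite mul1r => H.
  have : F (fun _ => 0) + F (fun _ => 0) - F (fun _ => 0) = 0 by rewrite -H subrr.
  by rewrite addrK.
elim: r => [|a r IH].
  rewrite big_nil.
  have -> : (fun t : Gamma => \sum_(s <- [::]) y s * Zb R s t) = (fun _ => 0).
    by apply: funext => t; rewrite big_nil.
  exact: F0.
have vtest : test (fun t => \sum_(s <- r) y s * Zb R s t).
  apply: (fin_support_test [fset s | s in r]%fset) => t tr.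
  rewrite big_seq big1 // => s sr; rewrite /Zb ifN ?mulr0 //.
  apply/negP => /eqP ts; move: tr; rewrite ts; apply/negP/negPn.
  by apply/imfsetP; exists s.
have -> : (fun t : Gamma => \sum_(s <- a :: r) y s * Zb R s t) =
   (fun t => y a * Zb R a t + (fun t => \sum_(s <- r) y s * Zb R s t) t).
  by apply: funext => t; rewrite big_cons.
rewrite lin //; last exact: Zb_test.
by rewrite big_cons -IH.
Qed.

Lemma partial_val {R : realType} (y : vect R) (A : {fset Gamma}) t :
  \sum_(s <- A) y s * Zb R s t = if t \in A then y t else 0.
Proof.
case: ifPn => tA.
  rewrite (big_fsetD1 t) //= /Zb eqxx mulr1 big_seq big1 ?addr0 // => s.
  by rewrite !inE => /andP [st _]; rewrite eq_sym (negPf st) mulr0.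
rewrite big_seq big1 // => s sA; rewrite /Zb ifN ?mulr0 //.
by apply/negP => /eqP ts; move: tA; rewrite ts sA.
Qed.

Lemma gen_good {R : realType} (F : GF R) : gen_functional F -> good F.
Proof.
move=> gF; have [lin [p [c bnd]]] := gF.
move=> y ty eps eps0.
pose f t := (lam R t) ^+ (2 * p) * cmod (y t) ^+ 2.
have f0 t : 0 <= f t.
  by rewrite /f mulr_ge0 ?exprn_ge0 ?cmod_ge0 // (le_trans _ (lam_ge1 t)).
have eps'0 : 0 < eps ^+ 2 / (`|c| + 1) by rewrite divr_gt0 ?exprn_gt0 // ltr_wpDl.
have [A HA] := esum_tail f f0 (ty p) _ eps'0.
exists A => A' AA'.
pose u t := if t \in A' then 0 else y t.
have tu : test u.
  apply: test_le ty => t; rewrite /u; case: ifP => _; by rewrite ?cmod0 ?cmod_ge0.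
have yE : y = (fun t => 1 * u t + (fun t => \sum_(s <- A') y s * Zb R s t) t).
  by apply: funext => t; rewrite partial_val mul1r /u; case: ifP; rewrite ?add0r ?addr0.
have tv : test (fun t => \sum_(s <- A') y s * Zb R s t).
  apply: (fin_support_test A') => t tA; rewrite partial_val; by rewrite (negPf tA).
rewrite {1}yE lin // mul1r partial_eval // addrK.
have Pu : (pnorm2 p u <= (eps ^+ 2 / (`|c| + 1))%:E)%E.
  apply: ge_ereal_sup => _ [X [finX _] <-].
  rewrite fsbig_finite //= sumEFin lee_fin.
  rewrite (eq_bigr (fun t => if t \notin A' then f t else 0)); last first.
    by move=> t _; rewrite /u /f; case: ifP => _ //=; rewrite !expr0n /= addr0 sqrtr0 expr0n mulr0.
  rewrite -big_mkcond /= big_fset_condE /=; apply: HA => t.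
  rewrite !inE => /andP [_ tA']; apply/negP => tA; move/negP: tA'; apply.
  exact: (fsubsetP AA').
have Pu0 : (0 <= pnorm2 p u)%E by apply: esum_ge0 => t _; rewrite lee_fin mulr_ge0 ?exprn_ge0 ?cmod_ge0 // (le_trans _ (lam_ge1 t)).
have PuE : pnorm2 p u = (fine (pnorm2 p u))%:E by rewrite fineK // ge0_fin_numE // tu.
have := bnd u tu; rewrite PuE -EFinM lee_fin => H1.
move: Pu; rewrite PuE lee_fin => H2.
move: Pu0; rewrite PuE lee_fin => H3.
set P := fine _ in H1 H2 H3.
have H4 : c * P <= eps ^+ 2.
  have : c * P <= `|c| * P by rewrite ler_wpM2r // ler_norm.
  move=> /le_trans; apply.
  have : `|c| * P <= `|c| * (eps ^+ 2 / (`|c| + 1)) by rewrite ler_wpM2l.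
  move=> /le_trans; apply.
  rewrite mulrA ler_pdivrMr ?ltr_wpDl // mulrC ler_wpM2l ?exprn_ge0 ?ltW //.
  by rewrite ltrDl.
have := cmod_ge0 (F u); set z := cmod (F u) => z0.
have : z ^+ 2 <= eps ^+ 2 by apply: le_trans H1 H4.
move=> H5; nra.
Qed.

Lemma good_add {R : realType} (F G : GF R) :
  good F -> good G -> good (fun x => F x + G x).
Proof.
move=> gF gG y ty eps eps0.
have e2 : 0 < eps / 2 by rewrite divr_gt0.
have [A1 H1] := gF y ty _ e2; have [A2 H2] := gG y ty _ e2.
exists (A1 `|` A2)%fset => A' sub.
have s1 : (A1 `<=` A')%fset by apply: fsubset_trans sub; apply: fsubsetUl.
have s2 : (A2 `<=` A')%fset by apply: fsubset_trans sub; apply: fsubsetUr.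
have := H1 _ s1; have := H2 _ s2.
have -> : F y + G y - \sum_(s <- A') y s * (F (Zb R s) + G (Zb R s)) =
  (F y - \sum_(s <- A') y s * F (Zb R s)) + (G y - \sum_(s <- A') y s * G (Zb R s)).
  rewrite (eq_bigr (fun s => y s * F (Zb R s) + y s * G (Zb R s))); last by move=> s _; rewrite mulrDr.
  rewrite big_split /=; ring.
move=> h2 h1; apply: le_trans (cmodD _ _) _; lra.
Qed.

Lemma good_scale {R : realType} (a : R[i]) (F : GF R) :
  good F -> good (fun x => a * F x).
Proof.
move=> gF y ty eps eps0.
have e2 : 0 < eps / (cmod a + 1) by rewrite divr_gt0 // ltr_wpDl ?cmod_ge0.
have [A H] := gF y ty _ e2.
exists A => A' sub; have := H _ sub.
have -> : a * F y - \sum_(s <- A') y s * (a * F (Zb R s)) =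
   a * (F y - \sum_(s <- A') y s * F (Zb R s)).
  rewrite mulrBr mulr_sumr; congr (_ - _); apply: eq_bigr => s _; ring.
rewrite cmodM => h; have ca := cmod_ge0 a.
have cz := cmod_ge0 (F y - \sum_(s <- A') y s * F (Zb R s)).
move: h; set z := cmod _ => h.
rewrite ler_pdivlMr ?ltr_wpDl // in h.
nra.
Qed.

Lemma good_sub {R : realType} (F G : GF R) :
  good F -> good G -> good (fun x => F x - G x).
Proof.
move=> gF gG; have := good_add _ _ gF (good_scale (-1) _ gG).
have -> // : (fun x => F x + -1 * G x) = (fun x => F x - G x).
by apply: funext => x; rewrite mulN1r.
Qed.

Lemma good_sum {R : realType} {I : Type} (r : seq I) (G : I -> GF R) :
  (forall i, good (G i)) -> good (fun x => \sum_(i <- r) G i x).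
Proof.
move=> gG; elim: r => [|a r IH].
  move=> y ty eps eps0; exists fset0 => A' _.
  rewrite big_nil big1 ?subrr ?cmod0 ?ltW // => s _; by rewrite big_nil mulr0.
have -> : (fun x => \sum_(i <- a :: r) G i x) =
   (fun x => G a x + (fun x => \sum_(i <- r) G i x) x).
  by apply: funext => x; rewrite big_cons.
exact: good_add.
Qed.
Definition aw {R : realType} (k : nat) : R := 2 / ((k.+1)%:R ^+ 2).
Definition mu {R : realType} (s : Gamma) : R := \prod_(k <- s) aw k.

Lemma aw_ge0 {R : realType} k : 0 <= aw (R:=R) k.
Proof. by rewrite /aw divr_ge0 ?exprn_ge0. Qed.

Lemma mu_ge0 {R : realType} s : 0 <= mu (R:=R) s.
Proof. by rewrite /mu; apply: prodr_ge0 => k _; exact: aw_ge0. Qed.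

Lemma mu_sum_prod {R : realType} (N : nat) (G : {fset Gamma}) :
  (forall s, s \in G -> forall k, k \in s -> (k < N)%N) ->
  \sum_(s <- G) mu (R:=R) s <= \prod_(k < N) (1 + aw k).
Proof.
elim: N G => [|N IH] G HG.
  rewrite big_ord0.
  case: (boolP (fset0 \in G)) => G0.
    have -> : G = [fset fset0]%fset.
      apply/fsetP => s; rewrite inE; apply/idP/eqP => [sG|->//].
      by apply/fsetP => k; rewrite inE; apply/negP => /(HG _ sG).
    by rewrite big_seq_fset1 /mu big_seq_fset0.
  have -> : G = fset0.
    apply/fsetP => s; rewrite inE; apply/negP => sG; move/negP: G0; apply.
    suff <- : s = fset0 by [].
    by apply/fsetP => k; rewrite inE; apply/negP => /(HG _ sG).
  by rewrite big_seq_fset0.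
rewrite (big_fsetID _ (fun s : Gamma => N \in s)) /= big_ord_recr /=.
set G1 := [fset x in G | N \in x]%fset; set G2 := [fset x in G | N \notin x]%fset.
have P0 : 0 <= \prod_(k < N) (1 + aw (R:=R) k).
  by apply: prodr_ge0 => k _; rewrite addr_ge0 ?aw_ge0.
have h2 : \sum_(s <- G2) mu (R:=R) s <= \prod_(k < N) (1 + aw k).
  apply: IH => s; rewrite !inE => /andP [sG Ns] k ks.
  have := HG _ sG _ ks; rewrite ltnS leq_eqVlt => /orP [/eqP kN|//].
  by move: Ns; rewrite -kN ks.
have h1 : \sum_(s <- G1) mu (R:=R) s <= aw N * \prod_(k < N) (1 + aw k).
  have -> : \sum_(s <- G1) mu (R:=R) s = aw N * \sum_(s <- G1) mu (s `\ N)%fset.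
    rewrite mulr_sumr big_seq [in RHS]big_seq; apply: eq_bigr => s.
    by rewrite !inE => /andP [_ Ns]; rewrite /mu (big_fsetD1 N).
  rewrite ler_wpM2l ?aw_ge0 //.
  have inj : {in G1 &, injective (fun s : Gamma => (s `\ N)%fset)}.
    move=> s t; rewrite !inE => /andP [_ Ns] /andP [_ Nt] e.
    apply/fsetP => k; case: (eqVneq k N) => [->|kN]; first by rewrite Ns Nt.
    by have := congr1 (fun u => k \in u) e; rewrite /= !inE kN.
  have -> : \sum_(s <- G1) mu (R:=R) (s `\ N)%fset =
    \sum_(t <- [fset (s `\ N)%fset | s in G1]%fset) mu t.
    rewrite [RHS]big_imfset //=.
  apply: IH => t /imfsetP [s /= sG1 ->] k; rewrite !inE => /andP [kN ks].
  move: sG1; rewrite !inE => /andP [sG _].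
  by have := HG _ sG _ ks; rewrite ltnS leq_eqVlt (negPf kN).
rewrite mulrDr mulr1 mulrC; lra.
Qed.

Lemma prod_aw_bound_aux {R : realType} (N : nat) :
  \prod_(k < N.+1) (1 + aw (R:=R) k) * ((N.+2)%:R ^+ 2) <= 12 * (N.+1)%:R ^+ 2.
Proof.
elim: N => [|N IH].
  rewrite big_ord_recr big_ord0 /aw /= mul1r; lra.
rewrite big_ord_recr /=.
set Q := \prod_(i < N.+1) _ in IH *.
have Q0 : 0 <= Q by apply: prodr_ge0 => k _; rewrite addr_ge0 ?aw_ge0.
rewrite /aw.
set n : R := N%:R in IH *.
have n0 : 0 <= n by rewrite /n ler0n.
have e1 : (N.+1)%:R = n + 1 :> R by rewrite /n -natr1.
have e2 : (N.+2)%:R = n + 2 :> R by rewrite /n -!natr1; ring.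
have e3 : (N.+3)%:R = n + 3 :> R by rewrite /n -!natr1; ring.
rewrite e1 e2 e3 in IH *.
set m : R := n + 2 in IH *.
have m2 : 2 <= m by rewrite /m; lra.
have e4 : n + 1 = m - 1 by rewrite /m; ring.
rewrite e4 in IH.
have -> : n + 3 = m + 1 by rewrite /m; ring.
have em : 2 / m ^+ 2 = 2 * (m ^+ 2)^-1 by [].
rewrite em.
have mi : m ^+ 2 * (m ^+ 2)^-1 = 1 by rewrite mulfV // expf_neq0 //; lra.
set iv := (m ^+ 2)^-1 in mi *.
have H1 : Q * m ^+ 2 * ((m ^+ 2 + 2) * (m + 1) ^+ 2) <=
   12 * (m - 1) ^+ 2 * ((m ^+ 2 + 2) * (m + 1) ^+ 2).
  by rewrite ler_wpM2r // mulr_ge0 // ?exprn_ge0 //; nra.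
have H2 : 12 * (m - 1) ^+ 2 * ((m ^+ 2 + 2) * (m + 1) ^+ 2) <= 12 * m ^+ 2 * m ^+ 4.
  have -> : 12 * (m - 1) ^+ 2 * ((m ^+ 2 + 2) * (m + 1) ^+ 2) =
     12 * m ^+ 2 * m ^+ 4 - 12 * (3 * m ^+ 2 - 2) by ring.
  have : 0 <= 3 * m ^+ 2 - 2 by nra.
  lra.
have H3 : Q * ((m ^+ 2 + 2) * (m + 1) ^+ 2) <= 12 * m ^+ 4.
  have mp : 0 < m ^+ 2 by rewrite exprn_gt0 //; lra.
  rewrite -(ler_pM2r mp).
  have := le_trans H1 H2; congr (_ <= _); ring.
have -> : Q * (1 + 2 * iv) * (m + 1) ^+ 2 =
   Q * ((m ^+ 2 + 2) * (m + 1) ^+ 2) * iv.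
  have -> : 1 + 2 * iv = (m ^+ 2 + 2) * iv by rewrite mulrDl; lra.
  ring.
have iv0 : 0 <= iv by rewrite /iv invr_ge0 exprn_ge0 //; lra.
have : Q * ((m ^+ 2 + 2) * (m + 1) ^+ 2) * iv <= 12 * m ^+ 4 * iv by rewrite ler_wpM2r.
move=> /le_trans; apply.
have -> : 12 * m ^+ 4 * iv = 12 * m ^+ 2 * (m ^+ 2 * iv) by ring.
by rewrite mi mulr1.
Qed.

Lemma prod_aw_bound {R : realType} (N : nat) :
  \prod_(k < N) (1 + aw (R:=R) k) <= 12.
Proof.
case: N => [|N]; first by rewrite big_ord0; lra.
have := prod_aw_bound_aux (R:=R) N.
have Q0 : 0 <= \prod_(k < N.+1) (1 + aw (R:=R) k).
  by apply: prodr_ge0 => k _; rewrite addr_ge0 ?aw_ge0.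
set Q := \prod_(k < N.+1) _ in Q0 *.
have a1 : 1 <= (N.+1)%:R :> R by rewrite ler1n.
rewrite -!natr1 in a1 *.
set n := N%:R in a1 *.
move=> H; nra.
Qed.

Lemma mu_sum_bound {R : realType} (G : {fset Gamma}) : \sum_(s <- G) mu (R:=R) s <= 12.
Proof.
pose N := (\max_(s <- G) \max_(k <- s) k).+1.
apply: le_trans (prod_aw_bound N); apply: mu_sum_prod => s sG k ks.
rewrite /N ltnS.
apply: (@leq_trans (\max_(k <- s) k)).
  exact: (leq_bigmax_seq (F := id) k ks).
exact: (leq_bigmax_seq (F := fun s : Gamma => \max_(k <- s) k) s sG).
Qed.
Lemma esum_partial {R : realType} (g : nat -> R) (r : R) :
  (forall j, 0 <= g j) -> \esum_(j in [set: nat]) (g j)%:E = r%:E ->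
  (forall n, \sum_(j < n) g j <= r) /\
  (forall eps, 0 < eps -> exists N, forall n, (N <= n)%N -> r - eps <= \sum_(j < n) g j).
Proof.
move=> g0 E; split.
  move=> n; rewrite -lee_fin -E -sumEFin (@fsbig_ord _ _ _ n (fun j => (g j)%:E)); apply: esum_ge.
  by exists `I_n => //; split => //; exact: finite_II.
move=> eps eps0.
have : ((r - eps)%:E < \esum_(j in [set: nat]) (g j)%:E)%E by rewrite E lte_fin ltrBlDr ltrDl.
move=> /ereal_sup_gt [y [X [finX _] <-]].
rewrite fsbig_finite //= => H.
exists (\max_(j <- fset_set X) j).+1 => n Nn.
rewrite -lee_fin -sumEFin; apply: (le_trans (ltW H)).
have := lee_sum_fset_nat (f := fun j => (g j)%:E) (fset_set X) n xpredT.
rewrite big_mkord; apply => //; first by move=> i _; rewrite lee_fin.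
move=> j /= jX; rewrite /= (leq_trans _ Nn) // ltnS.
exact: (leq_bigmax_seq (F := id) j jX).
Qed.

Lemma ind01 {R : realType} s j : ind R s j = 0 \/ ind R s j = 1.
Proof. by rewrite /ind; case: (j \in s); [right|left]. Qed.
Lemma ind_ge0 {R : realType} s j : 0 <= ind R s j.
Proof. by case: (ind01 (R:=R) s j) => ->. Qed.
Lemma ind_le1 {R : realType} s j : ind R s j <= 1.
Proof. by case: (ind01 (R:=R) s j) => ->. Qed.

Lemma sum_ind_eq {R : realType} (F : nat -> R) m (s : Gamma) :
  (forall k, k \in s -> (k < m)%N) ->
  \sum_(k < m) ind R s k * F k = \sum_(k <- s) F k.
Proof.
move=> sm.
rewrite -(big_mkord xpredT (fun k => ind R s k * F k)).
rewrite (eq_bigr (fun k => if k \in s then F k else 0)); last first.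
  by move=> k _; rewrite /ind; case: (k \in s); rewrite ?mul1r ?mul0r.
rewrite -big_mkcond -big_filter; apply: perm_big.
apply: uniq_perm; first by rewrite filter_uniq // iota_uniq.
  exact: fset_uniq.
move=> k; rewrite mem_filter mem_iota add0n /=.
case: (boolP (k \in s)) => //= ks.
by rewrite subn0 sm.
Qed.

Lemma sum_ind_le {R : realType} (F : nat -> R) m (s : Gamma) :
  (forall k, 0 <= F k) ->
  \sum_(k < m) ind R s k * F k <= \sum_(k <- s) F k.
Proof.
move=> F0.
pose m' := maxn m (\max_(k <- s) k).+1.
rewrite -(sum_ind_eq F m' s); last first.
  move=> k ks; rewrite /m' leq_max; apply/orP; right.
  by rewrite ltnS; exact: (leq_bigmax_seq (F := id) k ks).
rewrite -(big_mkord xpredT (fun k => ind R s k * F k)).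
rewrite -(big_mkord xpredT (fun k => ind R s k * F k)).
rewrite [X in _ <= X](@big_cat_nat _ _ _ m) ?leq_maxl //=.
rewrite lerDl sumr_ge0 // => k _; by rewrite mulr_ge0 ?ind_ge0.
Qed.

Lemma conv_sum {R : realType} {I : Type} (r : seq I) (d : I -> nat -> R) :
  (forall k, forall eps, 0 < eps -> exists N, forall n, (N <= n)%N -> `|d k n| <= eps) ->
  forall eps, 0 < eps -> exists N, forall n, (N <= n)%N -> `|\sum_(k <- r) d k n| <= eps.
Proof.
move=> hd; elim: r => [|a r IH] eps eps0.
  by exists 0%N => n _; rewrite big_nil normr0 ltW.
have e2 : 0 < eps / 2 by rewrite divr_gt0.
have [N1 H1] := hd a _ e2; have [N2 H2] := IH _ e2.
exists (maxn N1 N2) => n; rewrite geq_max => /andP [n1 n2].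
rewrite big_cons; apply: le_trans (ler_normD _ _) _.
have := H1 _ n1; have := H2 _ n2; lra.
Qed.

Lemma E_decomp {R : realType} (w : nat -> nat -> R) (s : Gamma) :
  (forall j k, 0 <= w j k) ->
  \esum_(jk in [set: nat * nat]) ((1 - ind R s jk.1) * ind R s jk.2 * w jk.1 jk.2)%:E
  = \sum_(k <- s) \esum_(j in [set: nat]) ((1 - ind R s j) * w j k)%:E.
Proof.
move=> w0.
have i1 j : 0 <= 1 - ind R s j by rewrite subr_ge0 ind_le1.
have setE : [set: nat * nat] = [set: nat] `*`` (fun _ => [set: nat]).
  by apply/seteqP; split.
rewrite setE -(esum_esum (a := fun j k => ((1 - ind R s j) * ind R s k * w j k)%:E)); last first.
  by move=> j k _ _; rewrite lee_fin !mulr_ge0 ?ind_ge0.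
rewrite -esum_sum; last by move=> j k _ _; rewrite lee_fin mulr_ge0.
apply: eq_esum => j _.
rewrite (eq_esum (b := fun k => if k \in [set` s] then ((1 - ind R s j) * w j k)%:E else 0%E)).
  rewrite -esum_mkcond esum_fset ?finite_fset //; last first.
    by move=> k _; rewrite lee_fin mulr_ge0.
  by rewrite fsbig_finite ?finite_fset // set_fsetK.
move=> k _.
have -> : (k \in [set` s]) = (k \in s) by rewrite mem_setE.
rewrite /ind; case: (k \in s); by rewrite ?mulr1 ?mulr0 ?mul0r.
Qed.

Lemma col_sum_le {R : realType} (w : nat -> nat -> R) (c : R) k m :
  (forall j k, 0 <= w j k) ->
  (\esum_(j in [set: nat]) (w j k)%:E <= c%:E)%E ->
  \sum_(j < m) w j k <= c.
Proof.
move=> w0 hc; rewrite -lee_fin; apply: le_trans hc.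
rewrite -sumEFin (@fsbig_ord _ _ _ m (fun j => (w j k)%:E)); apply: esum_ge.
by exists `I_m => //; split => //; exact: finite_II.
Qed.

Lemma diag_le {R : realType} (w : nat -> nat -> R) (c : R) k :
  (\esum_(j in [set: nat]) (w j k)%:E <= c%:E)%E -> w k k <= c.
Proof.
move=> hc; rewrite -lee_fin; apply: le_trans hc.
by have := fin_le_esum (fun j => (w j k)%:E) [fset k]%fset; rewrite big_seq_fset1.
Qed.

Definition rk {R : realType} (w : nat -> nat -> R) (s : Gamma) (k : nat) : R :=
  fine (\esum_(j in [set: nat]) ((1 - ind R s j) * w j k)%:E).

Lemma rk_prop {R : realType} (w : nat -> nat -> R) (c : R) s k :
  (forall j k, 0 <= w j k) ->
  (\esum_(j in [set: nat]) (w j k)%:E <= c%:E)%E ->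
  \esum_(j in [set: nat]) ((1 - ind R s j) * w j k)%:E = (rk w s k)%:E /\
  0 <= rk w s k <= c.
Proof.
move=> w0 hc.
have i1 j : 0 <= 1 - ind R s j by rewrite subr_ge0 ind_le1.
set e := esum _ _.
have e0 : (0 <= e)%E by apply: esum_ge0 => j _; rewrite lee_fin mulr_ge0.
have ec : (e <= c%:E)%E.
  apply: le_trans hc; apply: le_esum => j _; rewrite lee_fin.
  by rewrite ler_piMl // lerBlDr lerDl ind_ge0.
have ef : e \is a fin_num by rewrite ge0_fin_numE // (le_lt_trans ec) // ltry.
have eE : e = (rk w s k)%:E by rewrite /rk -/e fineK.
split => //; move: e0 ec; rewrite eE !lee_fin => -> -> //.
Qed.

Lemma vartheta_eq {R : realType} (w : nat -> nat -> R) (c : R) s :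
  (forall j k, 0 <= w j k) ->
  (forall k, \esum_(j in [set: nat]) (w j k)%:E <= c%:E)%E ->
  vartheta w s = \sum_(k <- s) w k k + \sum_(k <- s) rk w s k.
Proof.
move=> w0 hc; rewrite /vartheta E_decomp //; congr (_ + _).
rewrite (eq_bigr (fun k => (rk w s k)%:E)); first by rewrite sumEFin.
by move=> k _; have [-> _] := rk_prop w c s k w0 (hc k).
Qed.

Definition thetan {R : realType} (w : nat -> nat -> R) (n : nat) (s : Gamma) : R :=
  \sum_(j < n.+1) \sum_(k < n.+1) w j k * (ind R s k * (1 - ind R (s `\ (k : nat))%fset j)).

Lemma thetan_eq {R : realType} (w : nat -> nat -> R) n s :
  thetan w n s = \sum_(k < n.+1) ind R s k *
     (\sum_(j < n.+1) (1 - ind R s j) * w j k + w k k).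
Proof.
rewrite /thetan exchange_big /=; apply: eq_bigr => k _.
rewrite (bigD1 k) //= [in RHS](bigD1 k) //=.
have e1 : ind R (s `\ (k : nat))%fset k = 0 by rewrite /ind !inE eqxx.
have e2 : \sum_(j < n.+1 | j != k) w j k * (ind R s k * (1 - ind R (s `\ (k : nat))%fset j)) =
   ind R s k * \sum_(j < n.+1 | j != k) (1 - ind R s j) * w j k.
  rewrite mulr_sumr; apply: eq_bigr => j jk.
  have -> : ind R (s `\ (k : nat))%fset j = ind R s j by rewrite /ind !inE jk.
  ring.
rewrite e1 e2 /ind; case: ((k : nat) \in s) => /=; ring.
Qed.

Lemma sum_const_seq {R : realType} {I : Type} (r : seq I) (x : R) :
  \sum_(i <- r) x = x * (size r)%:R.
Proof. elim: r => [|a r IH]; rewrite ?big_nil ?mulr0 // big_cons IH /= -natr1; ring. Qed.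

Lemma prod_const_seq {R : realType} {I : Type} (r : seq I) (x : R) :
  \prod_(i <- r) x = x ^+ size r.
Proof. elim: r => [|a r IH]; rewrite ?big_nil ?expr0 // big_cons IH /= exprS. by []. Qed.

Lemma theta_bounds {R : realType} (w : nat -> nat -> R) (c : R) s :
  (forall j k, 0 <= w j k) ->
  (forall k, \esum_(j in [set: nat]) (w j k)%:E <= c%:E)%E ->
  (forall n, 0 <= thetan w n s <= 2 * c * (size s)%:R) /\
  0 <= vartheta w s <= 2 * c * (size s)%:R.
Proof.
move=> w0 hc.
have i1 j : 0 <= 1 - ind R s j by rewrite subr_ge0 ind_le1.
have Fb k m : 0 <= \sum_(j < m) (1 - ind R s j) * w j k + w k k <= 2 * c.
  apply/andP; split; first by rewrite addr_ge0 ?sumr_ge0 // => j _; rewrite mulr_ge0.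
  have h1 : \sum_(j < m) (1 - ind R s j) * w j k <= c.
    apply: le_trans (col_sum_le w c k m w0 (hc k)); apply: ler_sum => j _.
    by rewrite ler_piMl // lerBlDr lerDl ind_ge0.
  have := diag_le w c k (hc k); lra.
split.
  move=> n; rewrite thetan_eq; apply/andP; split.
    by rewrite sumr_ge0 // => k _; rewrite mulr_ge0 ?ind_ge0 //; case/andP: (Fb k n.+1).
  apply: le_trans (sum_ind_le (fun k => \sum_(j < n.+1) (1 - ind R s j) * w j k + w k k) n.+1 s _) _.
    by move=> k; case/andP: (Fb k n.+1).
  rewrite -sum_const_seq; apply: ler_sum => k _; by case/andP: (Fb k n.+1).
rewrite (vartheta_eq w c s w0 hc) -sum_const_seq -big_split /=.
apply/andP; split.
  apply: sumr_ge0 => k _; have [_ /andP [h _]] := rk_prop w c s k w0 (hc k).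
  by rewrite addr_ge0.
apply: ler_sum => k _; have [_ /andP [_ h]] := rk_prop w c s k w0 (hc k).
have := diag_le w c k (hc k); lra.
Qed.

Lemma theta_conv {R : realType} (w : nat -> nat -> R) (c : R) s :
  (forall j k, 0 <= w j k) ->
  (forall k, \esum_(j in [set: nat]) (w j k)%:E <= c%:E)%E ->
  forall eps, 0 < eps -> exists N, forall n, (N <= n)%N ->
    `|thetan w n s - vartheta w s| <= eps.
Proof.
move=> w0 hc eps eps0.
have i1 j : 0 <= 1 - ind R s j by rewrite subr_ge0 ind_le1.
pose d k n := \sum_(j < n.+1) (1 - ind R s j) * w j k - rk w s k.
have hd : forall k, forall eps, 0 < eps -> exists N, forall n, (N <= n)%N -> `|d k n| <= eps.
  move=> k e e0.
  have [E _] := rk_prop w c s k w0 (hc k).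
  have [up lo] := esum_partial (fun j => (1 - ind R s j) * w j k) (rk w s k)
     (fun j => mulr_ge0 (i1 j) (w0 j k)) E.
  have [N HN] := lo e e0.
  exists N => n Nn; rewrite /d.
  have h1 := up n.+1; have h2 := HN n.+1 (leqW Nn).
  rewrite ler_norml; apply/andP; split; lra.
have [N1 H1] := conv_sum s d hd eps eps0.
exists (maxn N1 (\max_(k <- s) k)) => n; rewrite geq_max => /andP [n1 n2].
rewrite thetan_eq (sum_ind_eq (fun k => \sum_(j < n.+1) (1 - ind R s j) * w j k + w k k) n.+1 s); last first.
  move=> k ks; rewrite ltnS; apply: leq_trans n2.
  exact: (leq_bigmax_seq (F := id) k ks).
rewrite (vartheta_eq w c s w0 hc).
have -> : \sum_(k <- s) (\sum_(j < n.+1) (1 - ind R s j) * w j k + w k k) -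
   (\sum_(k <- s) w k k + \sum_(k <- s) rk w s k) = \sum_(k <- s) d k n.
  rewrite big_split /= /d sumrB /=; ring.
exact: H1.
Qed.
Lemma cmod_sum {R : realType} {I : Type} (r : seq I) (f : I -> R[i]) :
  cmod (\sum_(i <- r) f i) <= \sum_(i <- r) cmod (f i).
Proof.
elim: r => [|a r IH]; first by rewrite !big_nil cmod0.
rewrite !big_cons; apply: le_trans (cmodD _ _) _; by rewrite lerD2l.
Qed.

Lemma mu_lam {R : realType} (s : Gamma) : mu (R:=R) s * lam R s ^+ 2 = 2 ^+ size s.
Proof.
rewrite /mu /lam -prodrXl -big_split /= -prod_const_seq; apply: eq_bigr => k _.
rewrite /aw mulrAC -mulrA mulfV ?mulr1 //.
Qed.

Lemma set_eq4 (s : Gamma) (j k : nat) : k \in s -> j \notin (s `\ k)%fset ->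
  ((((s `\ k) `|` [fset j]) `\ j) `|` [fset k])%fset = s.
Proof.
move=> ks js; apply/fsetP => t; rewrite !inE.
case: (eqVneq t k) => [->|tk]; first by rewrite orbT ks.
rewrite orbF /=.
case: (eqVneq t j) => [tj|tj] /=; first by move: js; rewrite !inE -tj tk /= => /negPf ->.
by rewrite orbF.
Qed.

Lemma fockT {R : realType} (a ad : nat -> GF R -> GF R) (Phi : GF R) (j k : nat) :
  is_annihilators a -> is_creators ad -> gen_functional Phi ->
  gen_functional (ad k (a j (ad j (a k Phi)))) /\
  forall s, fock (ad k (a j (ad j (a k Phi)))) s =
     (ind R s k * (1 - ind R (s `\ k)%fset j))%:C * fock Phi s.
Proof.
move=> ha hc gP.
have [g1 f1] := ha k Phi gP.
have [g2 f2] := hc j _ g1.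
have [g3 f3] := ha j _ g2.
have [g4 f4] := hc k _ g3.
split => // s.
rewrite f4 f3 f2 f1.
case: (boolP (k \in s)) => ks; last first.
  by rewrite /ind (negPf ks) /= ?mul0r ?rmorph0 ?mul0r.
case: (boolP (j \in (s `\ k)%fset)) => js.
  by rewrite /ind js /= subrr ?mulr0 ?mul0r ?rmorph0 ?mulr0 ?mul0r.
rewrite set_eq4 // /ind ks (negPf js) !inE eqxx /=.
have -> : ((k != j) && ((k != k) && (k \in s) || (k == j))) = false.
  by rewrite eqxx /=; case: (eqVneq k j).
rewrite orbT /= !subr0 !mulr1 !rmorph1 !mul1r //.
Qed.

Lemma fockS {R : realType} (w : nat -> nat -> R) (a ad : nat -> GF R -> GF R) (Phi : GF R) n s :
  is_annihilators a -> is_creators ad -> gen_functional Phi ->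
  \sum_(j < n.+1) \sum_(k < n.+1) (w j k)%:C * ad k (a j (ad j (a k Phi))) (Zb R s)
  = (thetan w n s)%:C * fock Phi s.
Proof.
move=> ha hc gP; rewrite /thetan rmorph_sum mulr_suml; apply: eq_bigr => j _.
rewrite rmorph_sum mulr_suml; apply: eq_bigr => k _.
have [_ f] := fockT a ad Phi j k ha hc gP; move: (f s); rewrite /fock => ->.
by rewrite !rmorphM !mulrA.
Qed.

Lemma sq_bound {R : realType} (z : R) : 0 <= z -> z <= 1 + z ^+ 2.
Proof. move=> z0; nra. Qed.

Theorem theorem3p6 (R : realType) (w : nat -> nat -> R)
  (K : GF R -> GF R) (a ad : nat -> GF R -> GF R) :
  weight2D w -> is_GWN_op w K -> is_annihilators a -> is_creators ad ->
  forall Phi : GF R, gen_functional Phi ->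
    strong_cvg
      (fun n : nat => fun x : vect R =>
         \sum_(j < n.+1) \sum_(k < n.+1)
            (w j k)%:C * ad k (a j (ad j (a k Phi))) x)
      (K Phi).
Proof.
move=> [w0 [c hc]] hK ha hc' Phi gP.
have c0w : 0 <= c.
  have := hc 0%N; have : (0 <= \esum_(j in [set: nat]) (w j 0%N)%:E)%E.
    by apply: esum_ge0 => j _; rewrite lee_fin.
  move=> /le_trans h /h; by rewrite lee_fin.
have [linP [p0 [c0 bndP]]] := gP.
have [gK fK] := hK Phi gP.
have fockb : forall s, cmod (fock Phi s) <= (1 + `|c0|) * lam R s ^+ (2 * p0).
  move=> s; have := bndP (Zb R s) (Zb_test s); rewrite pnorm2_Zb -EFinM lee_fin => h.
  have lp : 1 <= lam R s ^+ (2 * p0) by rewrite exprn_ege1 // lam_ge1.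
  have h2 : c0 * lam R s ^+ (2 * p0) <= `|c0| * lam R s ^+ (2 * p0).
    by rewrite ler_wpM2r ?ler_norm // (le_trans ler01).
  have := sq_bound _ (cmod_ge0 (Phi (Zb R s))); rewrite /fock.
  have := normr_ge0 c0; nra.
move=> B [Btest Bbd] eps eps0.
have xb : forall q, exists C, 0 <= C /\ forall x, B x -> forall s, cmod (x s) * lam R s ^+ q <= C.
  move=> q; have [Cq HC] := Bbd q; exists (1 + `|Cq|); split.
    by rewrite addr_ge0 ?normr_ge0.
  move=> x Bx s; have := le_trans (pnorm2_ge_term q x s) (HC x Bx); rewrite lee_fin => h.
  have e : (cmod (x s) * lam R s ^+ q) ^+ 2 = lam R s ^+ (2 * q) * cmod (x s) ^+ 2.
    by rewrite exprMn -exprM mulnC mulrC.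
  have z0 : 0 <= cmod (x s) * lam R s ^+ q.
    by rewrite mulr_ge0 ?cmod_ge0 ?exprn_ge0 // (le_trans ler01) ?lam_ge1.
  have := sq_bound _ z0; rewrite e; have := ler_norm Cq; lra.
have [Cq [Cq0 HCq]] := xb (2 * p0 + 2)%N.
have [C0 [C00 HC0]] := xb 0%N.
pose M := Cq * (2 * c) * (1 + `|c0|).
have M0 : 0 <= M by rewrite /M !mulr_ge0 ?addr_ge0 ?normr_ge0.
have muE : (\esum_(s in [set: Gamma]) (mu (R:=R) s)%:E < +oo)%E.
  apply: (@le_lt_trans _ _ (12%:E)); last exact: ltry.
  apply: ge_ereal_sup => _ [X [finX _] <-].
  by rewrite fsbig_finite //= sumEFin lee_fin mu_sum_bound.
have e3 : 0 < eps / 3 / (M + 1) by rewrite !divr_gt0 // ltr_wpDl.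
have [A0 HA0] := esum_tail mu mu_ge0 muE _ e3.
pose dd s n := C0 * `|thetan w n s - vartheta w s| * cmod (fock Phi s).
have dd0 s n : 0 <= dd s n by rewrite /dd !mulr_ge0 ?normr_ge0 ?cmod_ge0.
have hd : forall s eps, 0 < eps -> exists N, forall n, (N <= n)%N -> `|dd s n| <= eps.
  move=> s e e0.
  set Kc := C0 * cmod (fock Phi s).
  have Kc0 : 0 <= Kc by rewrite /Kc mulr_ge0 ?cmod_ge0.
  have [N HN] := theta_conv w c s w0 hc (e / (Kc + 1)) (divr_gt0 e0 (ltr_wpDl Kc0 ltr01)).
  exists N => n Nn; rewrite ger0_norm // /dd.
  have h := HN n Nn.
  have : Kc * `|thetan w n s - vartheta w s| <= Kc * (e / (Kc + 1)) by rewrite ler_wpM2l.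
  have : Kc * (e / (Kc + 1)) <= e.
    rewrite mulrA ler_pdivrMr ?ltr_wpDl //; nra.
  rewrite /Kc; move=> h1 h2; apply: le_trans h1.
  apply: le_trans h2; rewrite mulrAC.
  by [].
have e3b : 0 < eps / 3 by rewrite divr_gt0.
have [N HN] := conv_sum A0 dd hd (eps / 3) e3b.
exists N => n Nn x Bx.
have tx := Btest x Bx.
pose D := fun y : vect R => \sum_(j < n.+1) \sum_(k < n.+1)
   (w j k)%:C * ad k (a j (ad j (a k Phi))) y - K Phi y.
change (cmod (D x) <= eps).
have gD : good D.
  apply: good_sub; last exact: gen_good.
  apply: (good_sum _ (fun (j : 'I_n.+1) y => \sum_(k < n.+1) (w j k)%:C * ad k (a j (ad j (a k Phi))) y)) => j.
  apply: (good_sum _ (fun (k : 'I_n.+1) y => (w j k)%:C * ad k (a j (ad j (a k Phi))) y)) => k.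
  apply: good_scale; apply: gen_good.
  by have [g _] := fockT a ad Phi j k ha hc' gP.
have [A1 HA1] := gD x tx (eps / 3) e3b.
pose A' := (A1 `|` A0)%fset.
have H1 := HA1 A' (fsubsetUl _ _).
have DZ s : D (Zb R s) = (thetan w n s - vartheta w s)%:C * fock Phi s.
  rewrite /D /= (fockS w a ad Phi n s ha hc' gP); move: (fK s); rewrite /fock => ->.
  by rewrite rmorphB mulrBl.
have term s : cmod (x s * D (Zb R s)) =
    cmod (x s) * (`|thetan w n s - vartheta w s| * cmod (fock Phi s)).
  by rewrite DZ !cmodM cmodC.
rewrite (big_fsetID _ (mem A0)) /= in H1.
have eA : [fset t in A' | t \in A0]%fset = A0.
  apply/fsetP => t; rewrite !inE; case: (boolP (t \in A0)) => tA0; by rewrite ?orbT ?andbF.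
rewrite eA in H1.
set S0 := \sum_(s <- A0) _ in H1.
set S1 := \sum_(s <- [fset t in A' | t \notin A0]%fset) _ in H1.
have hS0 : cmod S0 <= eps / 3.
  apply: le_trans (cmod_sum _ _) _.
  have := HN n Nn; rewrite ger0_norm ?sumr_ge0 //; apply: le_trans.
  apply: ler_sum => s _; rewrite term /dd mulrA ler_wpM2r ?mulr_ge0 ?normr_ge0 ?cmod_ge0 //.
  rewrite ler_wpM2r ?normr_ge0 //; by have := HC0 x Bx s; rewrite expr0 mulr1.
have hS1 : cmod S1 <= eps / 3.
  apply: le_trans (cmod_sum _ _) _.
  apply: (@le_trans _ _ (\sum_(s <- [fset t in A' | t \notin A0]%fset) M * mu s)).
    apply: ler_sum => s _; rewrite term.
    have [hb1 hb2] := theta_bounds w c s w0 hc.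
    have dl : `|thetan w n s - vartheta w s| <= 2 * c * (size s)%:R.
      case/andP: (hb1 n) => ? ?; case/andP: hb2 => ? ?.
      rewrite ler_norml; apply/andP; split; lra.
    have sz : (size s)%:R <= mu (R:=R) s * lam R s ^+ 2.
      rewrite mu_lam -natrX ler_nat; exact: (ltnW (ltn_expl _ (isT : 1 < 2)%N)).
    have fb := fockb s.
    have xq := HCq x Bx s.
    have l1 := lam_ge1 (R:=R) s.
    set L := lam R s in sz fb xq l1.
    set X := cmod (x s) in xq *.
    have X0 : 0 <= X by exact: cmod_ge0.
    set Y := cmod (fock Phi s) in fb *.
    set dlt := `|_| in dl *.
    have Lp : 0 <= L ^+ (2 * p0) by rewrite exprn_ge0 // (le_trans ler01).
    have L2 : 0 <= L ^+ 2 by rewrite exprn_ge0 // (le_trans ler01).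
    have mus := mu_ge0 (R:=R) s.
    have e1 : X * (dlt * Y) <= X * ((2 * c * (mu s * L ^+ 2)) * ((1 + `|c0|) * L ^+ (2 * p0))).
      apply: ler_wpM2l => //; apply: ler_pM => //; first by rewrite normr_ge0.
        by rewrite cmod_ge0.
      apply: le_trans dl _; rewrite ler_wpM2l ?mulr_ge0 //.
    apply: le_trans e1 _.
    have -> : X * (2 * c * (mu s * L ^+ 2) * ((1 + `|c0|) * L ^+ (2 * p0))) =
       (X * L ^+ (2 * p0 + 2)) * (2 * c * (1 + `|c0|)) * mu s.
      rewrite exprD; ring.
    have k0 : 0 <= 2 * c * (1 + `|c0|) by rewrite !mulr_ge0 ?addr_ge0 ?normr_ge0.
    apply: ler_wpM2r => //; apply: le_trans (ler_wpM2r k0 xq) _.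
    by rewrite /M !mulrA.
  rewrite -mulr_sumr.
  have := HA0 [fset t in A' | t \notin A0]%fset.
  have hyp : forall t, t \in [fset t in A' | t \notin A0]%fset -> t \notin A0.
    by move=> t; rewrite !inE => /andP [_].
  move=> /(_ hyp) h.
  apply: le_trans (ler_wpM2l M0 h) _.
  rewrite mulrA ler_pdivrMr ?ltr_wpDl //.
  have : 0 < eps / 3 by [].
  nra.
have : cmod (D x) <= cmod (D x - (S0 + S1)) + cmod S0 + cmod S1.
  have := cmodD (D x - (S0 + S1)) S0; have := cmodD (D x - (S0 + S1) + S0) S1.
  have -> : D x - (S0 + S1) + S0 + S1 = D x by ring.
  lra.
lra.
Qed.
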